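(* For all formulas $\alpha,\beta$, the following hold in ${\bf Km}$: (i) $\Box \alpha, \Diamond \alpha, \Diamond \neg \beta \vdash_{\bf Km} \Diamond \neg (\alpha \to \beta)$; (ii) $\Diamond \alpha, \Box \neg \beta, \Diamond \neg \beta \vdash_{\bf Km} \Diamond \neg (\alpha \to \beta)$; (iii) $\Box \alpha, \Diamond \alpha, \Box \neg \beta \vdash_{\bf Km} \Box \neg(\alpha \to \beta)$; (iv) $\Diamond \alpha, \Diamond \beta \vdash_{\bf Km} \Diamond(\alpha \to \beta)$; (v) $\Diamond \neg \alpha, \Diamond \beta \vdash_{\bf Km} \Diamond(\alpha \to \beta)$; (vi) $\Diamond \neg \alpha, \Diamond \neg \beta \vdash_{\bf Km} \Diamond(\alpha \to \beta)$.
   Context: Formulas are built from a denumerable set of propositional variables by the unary connectives $\neg$, $\Box$ and the binary connective $\to$; $For$ is the set of all formulas. Abbreviations: $\Diamond\alpha:=\neg\Box\neg\alpha$, $\alpha\vee\beta:=\neg\alpha\to\beta$, $\alpha\wedge\beta:=\neg(\alpha\to\neg\beta)$. ${\bf Km}$ is the Hilbert calculus whose axioms are all instances (over $For$) of the axiom schemas of a standard Hilbert calculus for classical propositional logic in the signature $\{\neg,\to\}$, plus all instances of: (K') $\Diamond\alpha\to(\Box(\alpha\to\beta)\to(\Box\alpha\to\Box\beta))$; (K1') $\Diamond\neg\beta\to(\Box(\alpha\to\beta)\to(\Diamond\alpha\to\Diamond\beta))$; (K2') $\Diamond\alpha\to(\Diamond(\alpha\to\beta)\to(\Box\alpha\to\Diamond\beta))$;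 (M3') $(\Diamond\alpha\vee\Diamond\neg\alpha)\to(\Diamond\beta\to\Diamond(\alpha\to\beta))$; (M4') $\Diamond\neg\beta\to(\Diamond\neg\alpha\to\Diamond(\alpha\to\beta))$; (I1) $(\Box\alpha\wedge\Box\neg\alpha)\to(\Box(\alpha\to\beta)\wedge\Box\neg(\alpha\to\beta))$; (I2) $(\Box\beta\wedge\Box\neg\beta)\to(\Box(\alpha\to\beta)\wedge\Box\neg(\alpha\to\beta))$; (M1) $\neg\Diamond\alpha\to\Box(\alpha\to\beta)$; (M2) $\Box\beta\to\Box(\alpha\to\beta)$; (DN1) $\Box\alpha\to\Box\neg\neg\alpha$; (DN2) $\Box\neg\neg\alpha\to\Box\alpha$. Modus ponens is the only rule; $\Gamma\vdash_{\bf Km}\alpha$ means there is a derivation of $\alpha$ from $\Gamma$. *)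

(* Defs.v *)
From Stdlib Require Import List.
Import ListNotations.

Inductive For : Type :=
| Var : nat -> For
| Neg : For -> For
| Box : For -> For
| Imp : For -> For -> For.

Definition Dia (a : For) : For := Neg (Box (Neg a)).
Definition Or (a b : For) : For := Imp (Neg a) b.
Definition And (a b : For) : For := Neg (Imp a (Neg b)).

(* Axioms of Km: a standard Hilbert calculus for CPL in {neg, ->}
   (Lukasiewicz/Mendelson-style A1-A3) plus the modal schemas. *)
Inductive KmAxiom : For -> Prop :=
| Ax1 a b : KmAxiom (Imp a (Imp b a))
| Ax2 a b c : KmAxiom (Imp (Imp a (Imp b c)) (Imp (Imp a b) (Imp a c)))
| Ax3 a b : KmAxiom (Imp (Imp (Neg a) (Neg b)) (Imp b a))
| AxK' a b : KmAxiom (Imp (Dia a) (Imp (Box (Imp a b)) (Imp (Box a) (Box b))))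
| AxK1' a b : KmAxiom (Imp (Dia (Neg b)) (Imp (Box (Imp a b)) (Imp (Dia a) (Dia b))))
| AxK2' a b : KmAxiom (Imp (Dia a) (Imp (Dia (Imp a b)) (Imp (Box a) (Dia b))))
| AxM3' a b : KmAxiom (Imp (Or (Dia a) (Dia (Neg a))) (Imp (Dia b) (Dia (Imp a b))))
| AxM4' a b : KmAxiom (Imp (Dia (Neg b)) (Imp (Dia (Neg a)) (Dia (Imp a b))))
| AxI1 a b : KmAxiom (Imp (And (Box a) (Box (Neg a)))
                          (And (Box (Imp a b)) (Box (Neg (Imp a b)))))
| AxI2 a b : KmAxiom (Imp (And (Box b) (Box (Neg b)))
                          (And (Box (Imp a b)) (Box (Neg (Imp a b)))))
| AxM1 a b : KmAxiom (Imp (Neg (Dia a)) (Box (Imp a b)))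
| AxM2 a b : KmAxiom (Imp (Box b) (Box (Imp a b)))
| AxDN1 a : KmAxiom (Imp (Box a) (Box (Neg (Neg a))))
| AxDN2 a : KmAxiom (Imp (Box (Neg (Neg a))) (Box a)).

Inductive Km_derives (Gamma : For -> Prop) : For -> Prop :=
| D_hyp a : Gamma a -> Km_derives Gamma a
| D_ax a : KmAxiom a -> Km_derives Gamma a
| D_mp a b : Km_derives Gamma (Imp a b) -> Km_derives Gamma a -> Km_derives Gamma b.

Definition premises (l : list For) : For -> Prop := fun a => In a l.

(* Main.v *)
Require Import Defs.
From Stdlib Require Import List.
Import ListNotations.

Definition ext (G : For -> Prop) (a : For) : For -> Prop := fun x => x = a \/ G x.

Lemma weaken (G D : For -> Prop) f : (forall x, G x -> D x) -> Km_derives G f -> Km_derives D f.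
Proof. intros H d; induction d. apply D_hyp; auto. apply D_ax; auto. eapply D_mp; eauto. Qed.

Lemma ident G a : Km_derives G (Imp a a).
Proof.
  eapply D_mp. eapply D_mp. apply D_ax, (Ax2 a (Imp a a) a).
  apply D_ax, Ax1. apply D_ax, Ax1.
Qed.

Lemma deduction G a b : Km_derives (ext G a) b -> Km_derives G (Imp a b).
Proof.
  intro d; induction d.
  - destruct H as [->|H]. apply ident. eapply D_mp. apply D_ax, Ax1. apply D_hyp; auto.
  - eapply D_mp. apply D_ax, Ax1. apply D_ax; auto.
  - eapply D_mp. eapply D_mp. apply D_ax, Ax2. exact IHd1. exact IHd2.
Qed.

Lemma hyp0 G a : Km_derives (ext G a) a.
Proof. apply D_hyp; left; auto. Qed.

Lemma up G a f : Km_derives G f -> Km_derives (ext G a) f.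
Proof. apply weaken; intros; right; auto. Qed.

Lemma T3 G x y : Km_derives G (Imp (Neg x) (Imp x y)).
Proof.
  apply deduction, deduction.
  eapply D_mp. eapply D_mp. apply D_ax, (Ax3 y x).
  eapply D_mp. apply D_ax, Ax1. apply up, hyp0.
  apply hyp0.
Qed.

Lemma T1 G x : Km_derives G (Imp (Neg (Neg x)) x).
Proof.
  apply deduction.
  eapply D_mp. eapply D_mp. apply D_ax, (Ax3 x (Neg (Neg x))).
  eapply D_mp. apply T3. apply hyp0. apply hyp0.
Qed.

Lemma reductio G X Y : Km_derives (ext G X) Y -> Km_derives (ext G X) (Neg Y) -> Km_derives G (Neg X).
Proof.
  intros h1 h2. apply deduction in h1. apply deduction in h2.
  assert (hx : Km_derives (ext G (Neg (Neg X))) X).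
  { eapply D_mp. apply T1. apply hyp0. }
  assert (d : Km_derives G (Imp (Neg (Neg X)) (Neg (Imp X X)))).
  { apply deduction. eapply D_mp. eapply D_mp. apply T3.
    eapply D_mp. apply up, h2. exact hx.
    eapply D_mp. apply up, h1. exact hx. }
  eapply D_mp. eapply D_mp. apply D_ax, (Ax3 (Neg X) (Imp X X)). exact d. apply ident.
Qed.

Ltac hy := apply D_hyp; cbv; tauto.
Ltac hy2 := apply D_hyp; cbv; tauto.

Theorem mainTheorem19 : forall a b : For,
  Km_derives (premises [Box a; Dia a; Dia (Neg b)]) (Dia (Neg (Imp a b))) /\
  Km_derives (premises [Dia a; Box (Neg b); Dia (Neg b)]) (Dia (Neg (Imp a b))) /\
  Km_derives (premises [Box a; Dia a; Box (Neg b)]) (Box (Neg (Imp a b))) /\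
  Km_derives (premises [Dia a; Dia b]) (Dia (Imp a b)) /\
  Km_derives (premises [Dia (Neg a); Dia b]) (Dia (Imp a b)) /\
  Km_derives (premises [Dia (Neg a); Dia (Neg b)]) (Dia (Imp a b)).
Proof.
  intros a b. split; [|split; [|split; [|split; [|split]]]].
  - unfold Dia. apply (reductio _ _ (Box (Neg (Neg b)))).
    + eapply D_mp. apply D_ax, AxDN1.
      eapply D_mp. eapply D_mp. eapply D_mp. apply D_ax, (AxK' a b).
      hy. eapply D_mp. apply D_ax, AxDN2. apply hyp0. hy.
    + hy.
  - unfold Dia. apply (reductio _ _ (Box (Neg b))).
    + hy.
    + change (Km_derives (ext (premises [Dia a; Box (Neg b); Dia (Neg b)]) (Box (Neg (Neg (Imp a b)))))
        (Dia b)).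
      eapply D_mp. eapply D_mp. eapply D_mp. apply D_ax, (AxK1' a b).
      hy. eapply D_mp. apply D_ax, AxDN2. apply hyp0. hy.
  - eapply D_mp. apply T1.
    apply (reductio _ _ (Box (Neg b))).
    + hy.
    + change (Km_derives (ext (premises [Box a; Dia a; Box (Neg b)]) (Dia (Imp a b))) (Dia b)).
      eapply D_mp. eapply D_mp. eapply D_mp. apply D_ax, (AxK2' a b).
      hy. apply hyp0. hy.
  - eapply D_mp. eapply D_mp. apply D_ax, (AxM3' a b).
    + unfold Or. apply deduction. eapply D_mp. eapply D_mp. apply T3. apply hyp0. hy.
    + hy.
  - eapply D_mp. eapply D_mp. apply D_ax, (AxM3' a b).
    + unfold Or. eapply D_mp. apply D_ax, Ax1. hy.
    + hy.
  - eapply D_mp. eapply D_mp. apply D_ax, (AxM4' a b). hy. hy.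
Qed.
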